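(* Let $R_1$ and $R_2$ be finite commutative principal ideal rings with unity, and let $R=R_1\times R_2$. Suppose $\operatorname{diam}(\Gamma(R_1))=\operatorname{diam}(\Gamma(R_2))=0$. Then $\overline{\Gamma(R)}$ is a divisor graph if and only if at least one of $R_1$ and $R_2$ is an integral domain.
   Context: For a commutative ring $S$ with unity, $Z(S)$ denotes its set of zero divisors. The zero divisor graph $\Gamma(S)$ is the simple graph with vertex set $Z(S)\setminus\{0\}$, distinct $a,b$ adjacent iff $ab=0$; its complement $\overline{\Gamma(S)}$ has the same vertex set with distinct $a,b$ adjacent iff $ab\neq 0$. The diameter of a graph is the maximum distance (number of edges in a shortest path) between pairs of vertices. In the paper's usage, $\operatorname{diam}(\Gamma(S))=0$ means $\Gamma(S)$ has at most one vertex, i.e. $S$ has at most one nonzero zero divisor (this includes the case that $S$ is an integral domain). For a nonempty set $T$ of positive integers, the divisor graph $G(T)$ has vertex set $T$, with distinct $i,j$ adjacent iff $i\mid j$ or $j\mid i$; a graph is a divisor graph if it is isomorphic to some $G(T)$. *)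

(* Defs.v *)
From HB Require Import structures.
From mathcomp Require Import all_boot all_order all_algebra.
Set Implicit Arguments. Unset Strict Implicit. Unset Printing Implicit Defensive.
Import GRing.Theory.
Local Open Scope ring_scope.

Definition is_ideal (R : comNzRingType) (I : R -> Prop) : Prop :=
  [/\ I 0, (forall x y, I x -> I y -> I (x + y)) & (forall r x, I x -> I (r * x))].

Definition is_principal (R : comNzRingType) (I : R -> Prop) : Prop :=
  exists a : R, forall x, I x <-> exists r : R, x = r * a.

Definition principal_ideal_ring (R : comNzRingType) : Prop :=
  forall I : R -> Prop, is_ideal I -> is_principal I.

Definition zero_divisor (R : comNzRingType) (a : R) : Prop :=
  exists b : R, b != 0 /\ a * b = 0.

Definition zdg_vertex (R : comNzRingType) (a : R) : Prop :=
  zero_divisor a /\ a != 0.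

(* diam(Gamma(S)) = 0 : at most one vertex *)
Definition zdg_diam0 (R : comNzRingType) : Prop :=
  forall a b : R, zdg_vertex a -> zdg_vertex b -> a = b.

Definition zdg_compl_adj (R : comNzRingType) (a b : R) : Prop :=
  a <> b /\ a * b <> 0.

Definition integral_domain (R : comNzRingType) : Prop :=
  forall a b : R, a * b = 0 -> a = 0 \/ b = 0.

(* A graph with vertex set V (a predicate on T) and adjacency adj is a divisor
   graph if it is isomorphic to G(S) for some nonempty set S of positive
   integers: an injection f of V onto S with u ~ v iff f u | f v or f v | f u. *)
Definition divisor_graph (T : Type) (V : T -> Prop) (adj : T -> T -> Prop) : Prop :=
  (exists v, V v) /\
  exists f : T -> nat,
    (forall u v, V u -> V v -> f u = f v -> u = v) /\
    (forall v, V v -> (0 < f v)%N) /\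
    (forall u v, V u -> V v -> u <> v ->
       (adj u v <-> ((f u %| f v) || (f v %| f u))%N)).

(* Main.v *)
Require Import Defs.
From HB Require Import structures.
From mathcomp Require Import all_boot all_order all_algebra.
From mathcomp Require Import zify.

Definition enc (i j k l : nat) : nat := 2 ^ i * 3 ^ j * 5 ^ k * 7 ^ l.

Lemma enc_gt0 i j k l : 0 < enc i j k l.
Proof. by rewrite /enc !muln_gt0 !expn_gt0. Qed.

Lemma logn_enc p i j k l : prime p ->
  logn p (enc i j k l) = i * (p == 2) + j * (p == 3) + k * (p == 5) + l * (p == 7).
Proof.
move=> pp; rewrite /enc !lognM ?muln_gt0 ?expn_gt0 // !lognX !logn_prime //.
Qed.

Lemma enc_dvd i j k l i' j' k' l' :
  (enc i j k l %| enc i' j' k' l') = [&& i <= i', j <= j', k <= k' & l <= l'].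
Proof.
apply/idP/idP.
- move=> H.
  have L := fun p (pp : prime p) => dvdn_leq_log p (enc_gt0 i' j' k' l') H.
  have := L 2 isT; have := L 3 isT; have := L 5 isT; have := L 7 isT.
  rewrite !logn_enc //= !muln1 !muln0 !addn0 !add0n => ? ? ? ?; exact/and4P.
- case/and4P=> h1 h2 h3 h4.
  by rewrite /enc !dvdn_mul // dvdn_exp2l.
Qed.

Import GRing.Theory.
Local Open Scope ring_scope.

Section DG.
Variables (T : Type) (V : T -> Prop) (adj : T -> T -> Prop) (f : T -> nat).
Hypothesis finj : forall u v, V u -> V v -> f u = f v -> u = v.
Hypothesis fadj : forall u v, V u -> V v -> u <> v ->
       (adj u v <-> ((f u %| f v) || (f v %| f u))%N).

Lemma edge_or u v : V u -> V v -> u <> v -> adj u v ->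
  (f u %| f v)%N = ~~ (f v %| f u)%N.
Proof.
move=> Vu Vv uv /(fadj _ _ Vu Vv uv).
case: (boolP (f u %| f v)%N) => h1; case: (boolP (f v %| f u)%N) => h2 //= _.
by case: uv; apply: finj Vu Vv _; apply/eqP; rewrite eqn_dvd h1 h2.
Qed.

Lemma p3 x y w : V x -> V y -> V w -> x <> y -> y <> w -> x <> w ->
  adj x y -> adj y w -> ~ adj x w -> (f x %| f y)%N = (f w %| f y)%N.
Proof.
move=> Vx Vy Vw xy yw xw axy ayw naxw.
have e1 := edge_or _ _ Vx Vy xy axy.
have e2 := edge_or _ _ Vy Vw yw ayw.
have nd : ~~ ((f x %| f w)%N || (f w %| f x)%N).
  by apply/negP => /(fadj _ _ Vx Vw xw).
rewrite negb_or in nd.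
case/andP: nd => n1 n2.
case: (boolP (f x %| f y)%N) => h1; case: (boolP (f w %| f y)%N) => h2 //.
- have: (f y %| f w)%N by move: e2; rewrite h2 => ->.
  by move=> h3; case/negP: n1; exact: dvdn_trans h1 h3.
- have: (f y %| f x)%N by move: e1; rewrite (negbTE h1); case: (f y %| f x)%N.
  by move=> h3; case/negP: n2; exact: dvdn_trans h2 h3.
Qed.
End DG.

Section Ring.
Variables R1 R2 : finComNzRingType.
Local Notation P := (R1 * R2)%type.

Lemma pair_neq0 (a : R1) (b : R2) : ((a, b) != 0 :> P) = (a != 0) || (b != 0).
Proof. by rewrite -[0 : P]/(0, 0) xpair_eqE negb_and. Qed.

Lemma adjE (a c : R1) (b d : R2) :
  zdg_compl_adj ((a, b) : P) (c, d) <->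
  ((a, b) != (c, d)) && ((a * c != 0) || (b * d != 0)).
Proof.
rewrite /zdg_compl_adj -pair_neq0; split.
- by case=> h1 h2; apply/andP; split; apply/eqP.
- by case/andP=> /eqP h1 /eqP h2.
Qed.

Lemma vertexI (a c : R1) (b d : R2) :
  (c, d) != 0 :> P -> a * c = 0 -> b * d = 0 -> (a, b) != 0 :> P -> zdg_vertex ((a, b) : P).
Proof.
move=> h1 h2 h3 h4; split => //; exists (c, d); split => //.
by rewrite -[0 : P]/(0, 0) -h2 -h3.
Qed.
End Ring.

Lemma dichot (R : finComNzRingType) : zdg_diam0 R ->
  integral_domain R \/ exists z : R, z != 0 /\ z * z = 0.
Proof.
move=> D.
case: (boolP [exists a : R, exists b : R, (a != 0) && (b != 0) && (a * b == 0)]).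
- case/existsP=> a /existsP [b] /andP [/andP [a0 b0] /eqP ab].
  right; exists a; split => //.
  have ea : a = b.
    apply: D; split => //.
    + by exists b.
    + by exists a; rewrite mulrC.
  by rewrite {2}ea.
- move/negP=> H; left => a b ab.
  case: (eqVneq a 0) => a0; [by left|].
  case: (eqVneq b 0) => b0; [by right|].
  exfalso; apply: H; apply/existsP; exists a; apply/existsP; exists b.
  by rewrite a0 b0 ab eqxx.
Qed.

Lemma flip {a b : bool} : a = ~~ b -> b = ~~ a.
Proof. by case: a; case: b. Qed.

Ltac simp := rewrite ?xpair_eqE ?mul0r ?mulr0 ?mul1r ?mulr1 ?eqxx ?oner_eq0 /=;
  repeat (match goal with H : ?x * ?x = 0 |- context[?x * ?x] => rewrite H end);
  rewrite ?mul0r ?mulr0 ?eqxx;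
  repeat (match goal with H : (?x == ?y) = false |- context[?x == ?y] => rewrite H end); rewrite ?eqxx /=.
Ltac unf := repeat (match goal with x := _ |- _ => progress unfold x end).
Ltac neq := unf; apply/eqP; simp; done.
Ltac ad := unf; apply/adjE; simp; done.
Ltac nad := unf; move/adjE; simp; done.

Lemma not_dg (R1 R2 : finComNzRingType) (z1 : R1) (z2 : R2) :
  z1 != 0 -> z1 * z1 = 0 -> z2 != 0 -> z2 * z2 = 0 ->
  ~ divisor_graph (@zdg_vertex (R1 * R2)%type) (@zdg_compl_adj (R1 * R2)%type).
Proof.
move=> nz1 zz1 nz2 zz2 [_ [f [finj [_ fadj]]]].
have e10 : (z1 == 0) = false by apply/negbTE.
have e01 : (0 == z1) = false by rewrite eq_sym e10.
have e20 : (z2 == 0) = false by apply/negbTE.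
have e02 : (0 == z2) = false by rewrite eq_sym e20.
have ez1 : (z1 == 1) = false.
  by apply/negbTE/eqP => h; move: zz1; rewrite h mul1r; apply/eqP; rewrite oner_eq0.
have e1z : (1 == z1) = false by rewrite eq_sym ez1.
have ez2 : (z2 == 1) = false.
  by apply/negbTE/eqP => h; move: zz2; rewrite h mul1r; apply/eqP; rewrite oner_eq0.
have e2z : (1 == z2) = false by rewrite eq_sym ez2.
have o1 : (1 == 0 :> R1) = false by rewrite oner_eq0.
have o1' : (0 == 1 :> R1) = false by rewrite eq_sym oner_eq0.
have o2 : (1 == 0 :> R2) = false by rewrite oner_eq0.
have o2' : (0 == 1 :> R2) = false by rewrite eq_sym oner_eq0.
pose a : (R1 * R2)%type := (0, 1).
pose b : (R1 * R2)%type := (0, z2).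
pose c : (R1 * R2)%type := (1, 0).
pose d : (R1 * R2)%type := (1, z2).
pose e : (R1 * R2)%type := (z1, 0).
pose g : (R1 * R2)%type := (z1, 1).
pose s : (R1 * R2)%type := (z1, z2).
have Va : zdg_vertex a.
  by unf; apply: (@vertexI _ _ _ 1 _ 0); rewrite ?pair_neq0; simp.
have Vb : zdg_vertex b.
  by unf; apply: (@vertexI _ _ _ 1 _ 0); rewrite ?pair_neq0; simp.
have Vc : zdg_vertex c.
  by unf; apply: (@vertexI _ _ _ 0 _ 1); rewrite ?pair_neq0; simp.
have Vd : zdg_vertex d.
  by unf; apply: (@vertexI _ _ _ 0 _ z2); rewrite ?pair_neq0; simp.
have Ve : zdg_vertex e.
  by unf; apply: (@vertexI _ _ _ z1 _ 0); rewrite ?pair_neq0; simp.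
have Vg : zdg_vertex g.
  by unf; apply: (@vertexI _ _ _ z1 _ 0); rewrite ?pair_neq0; simp.
have Vs : zdg_vertex s.
  by unf; apply: (@vertexI _ _ _ z1 _ z2); rewrite ?pair_neq0; simp.
have P3 := @p3 _ _ _ f finj fadj.
have EO := @edge_or _ _ _ f finj fadj.
have s1 := P3 d g b Vd Vg Vb ltac:(neq) ltac:(neq) ltac:(neq) ltac:(ad) ltac:(ad) ltac:(nad).
have s2 := EO d g Vd Vg ltac:(neq) ltac:(ad).
have s3 := P3 e d g Ve Vd Vg ltac:(neq) ltac:(neq) ltac:(neq) ltac:(ad) ltac:(ad) ltac:(nad).
have s4 := P3 a d e Va Vd Ve ltac:(neq) ltac:(neq) ltac:(neq) ltac:(ad) ltac:(ad) ltac:(nad).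
have s5 := EO a d Va Vd ltac:(neq) ltac:(ad).
have s6 := P3 b a d Vb Va Vd ltac:(neq) ltac:(neq) ltac:(neq) ltac:(ad) ltac:(ad) ltac:(nad).
have s7 := P3 s a b Vs Va Vb ltac:(neq) ltac:(neq) ltac:(neq) ltac:(ad) ltac:(ad) ltac:(nad).
have s8 := P3 c g b Vc Vg Vb ltac:(neq) ltac:(neq) ltac:(neq) ltac:(ad) ltac:(ad) ltac:(nad).
have s9 := EO c g Vc Vg ltac:(neq) ltac:(ad).
have s10 := P3 e c g Ve Vc Vg ltac:(neq) ltac:(neq) ltac:(neq) ltac:(ad) ltac:(ad) ltac:(nad).
have s11 := P3 s c e Vs Vc Ve ltac:(neq) ltac:(neq) ltac:(neq) ltac:(ad) ltac:(ad) ltac:(nad).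
have s12 := EO s c Vs Vc ltac:(neq) ltac:(ad).
have s13 := P3 a s c Va Vs Vc ltac:(neq) ltac:(neq) ltac:(neq) ltac:(ad) ltac:(ad) ltac:(nad).
have s14 := EO a s Va Vs ltac:(neq) ltac:(ad).
have r2 := flip (etrans (esym s1) s2).
have r3 := etrans s3 r2.
have r4 := etrans s4 r3.
have r5 := flip (etrans (esym r4) s5).
have r6 := etrans s6 r5.
have r7 := etrans s7 r6.
have r9 := flip (etrans (esym s8) s9).
have r10 := etrans s10 r9.
have r11 := etrans s11 r10.
have r12 := flip (etrans (esym r11) s12).
have r13 := etrans s13 r12.
move: s14; rewrite r13 r7.
by case: (f b %| f g)%N.
Qed.

Section Construct.
Variables R1 R2 : finComNzRingType.
Local Notation P := (R1 * R2)%type.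
Hypothesis D1 : integral_domain R1.
Hypothesis D2 : zdg_diam0 R2.

Definition zd2 (b : R2) : bool := (b != 0) && [exists c : R2, (c != 0) && (b * c == 0)].
Definition r1 (a : R1) : nat := enum_rank a.
Definition r2 (b : R2) : nat := enum_rank b.
Definition NN := (#|R1| + #|R2|)%N.
Definition ff (x : P) : nat :=
  if x.1 != 0 then (if x.2 == 0 then enc (r1 x.1).+1 0 0 0 else enc NN NN 0 (r1 x.1).+1)
  else if zd2 x.2 then enc 0 NN 1 0 else enc 0 (r2 x.2).+1 0 0.

Lemma r1_lt a : (r1 a < #|R1|)%N. Proof. exact: ltn_ord. Qed.
Lemma r2_lt b : (r2 b < #|R2|)%N. Proof. exact: ltn_ord. Qed.
Lemma r1_inj a a' : r1 a = r1 a' -> a = a'.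
Proof. by move=> h; apply: enum_rank_inj; apply: ord_inj. Qed.
Lemma r2_inj a a' : r2 a = r2 a' -> a = a'.
Proof. by move=> h; apply: enum_rank_inj; apply: ord_inj. Qed.

Lemma zd2P b : zd2 b -> zdg_vertex b.
Proof.
by case/andP=> b0 /existsP [c /andP [c0 /eqP bc]]; split => //; exists c.
Qed.

Lemma zd2_sq b : zd2 b -> b * b = 0.
Proof.
move=> zb; have := zb; case/andP=> b0 /existsP [c /andP [c0 /eqP bc]].
have Vc : zdg_vertex c by split => //; exists b; rewrite mulrC.
have ebc : b = c := D2 _ _ (zd2P _ zb) Vc.
by rewrite {2}ebc.
Qed.

Lemma bbE b b' : (b * b' != 0) = [&& b != 0, b' != 0 & ~~ (zd2 b && zd2 b')].
Proof.
case: (eqVneq b 0) => [->|b0]; first by rewrite mul0r eqxx.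
case: (eqVneq b' 0) => [->|b'0]; first by rewrite mulr0 eqxx.
rewrite /=.
case: (eqVneq (b * b') 0) => h /=.
- have z1 : zd2 b by rewrite /zd2 b0 /=; apply/existsP; exists b'; rewrite b'0 h eqxx.
  have z2 : zd2 b' by rewrite /zd2 b'0 /=; apply/existsP; exists b; rewrite b0 mulrC h eqxx.
  by rewrite z1 z2.
- apply/esym/negP => /andP [z1 z2]; move: h.
  by rewrite (D2 _ _ (zd2P _ z1) (zd2P _ z2)) zd2_sq ?eqxx.
Qed.

Lemma aaE (a a' : R1) : (a * a' != 0) = (a != 0) && (a' != 0).
Proof.
case: (eqVneq a 0) => [->|a0]; first by rewrite mul0r eqxx.
case: (eqVneq a' 0) => [->|a'0]; first by rewrite mulr0 eqxx.
by apply/negP => /eqP /(D1 _ _) [] /eqP; apply/negP.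
Qed.

Lemma vtx (a : R1) (b : R2) : zdg_vertex ((a, b) : P) ->
  ((a == 0) ==> (b != 0)) && ((a != 0) ==> (b == 0) || zd2 b).
Proof.
case=> [[[c d] [cd0 [ac bd]]] ab0].
rewrite pair_neq0 in ab0; rewrite pair_neq0 in cd0.
apply/andP; split.
- by apply/implyP => /eqP a0; move: ab0; rewrite a0 eqxx.
- apply/implyP => a0.
  case: (eqVneq c 0) => c0.
  + rewrite c0 eqxx /= in cd0.
    case: (eqVneq b 0) => //= b0; rewrite /zd2 b0 /=; apply/existsP; exists d.
    by rewrite cd0 bd eqxx.
  + by case: (D1 _ _ ac) => h; [move: a0; rewrite h eqxx | move: c0; rewrite h eqxx].
Qed.

Lemma zd2_neq0 (b : R2) : zd2 b ==> (b != 0).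
Proof. by apply/implyP => /andP []. Qed.

Lemma construct : divisor_graph (@zdg_vertex P) (@zdg_compl_adj P).
Proof.
split.
  exists (1, 0); apply: (@vertexI _ _ _ 0 _ 1); by rewrite ?pair_neq0 ?mulr0 ?mul0r ?oner_eq0 ?eqxx ?orbT.
exists ff; split; [|split].
- move=> [a b] [a' b'] Vu Vv E.
  suff : ((a == 0) && (a' == 0) || (r1 a == r1 a')) &&
         ((b == 0) && (b' == 0) || zd2 b && zd2 b' || (r2 b == r2 b')).
    case/andP => /orP [/andP [/eqP -> /eqP ->] | /eqP /r1_inj ->].
    + case/orP => [/orP [/andP [/eqP -> /eqP ->] | /andP [z z']] | /eqP /r2_inj -> //] //.
      by rewrite (D2 _ _ (zd2P _ z) (zd2P _ z')).
    + case/orP => [/orP [/andP [/eqP -> /eqP ->] | /andP [z z']] | /eqP /r2_inj -> //] //.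
      by rewrite (D2 _ _ (zd2P _ z) (zd2P _ z')).
  have E1 : (ff (a, b) %| ff (a', b'))%N by rewrite E.
  have E2 : (ff (a', b') %| ff (a, b))%N by rewrite E.
  move: E1 E2; rewrite /ff /=.
  have := vtx _ _ Vu; have := vtx _ _ Vv.
  have := r1_lt a; have := r1_lt a'; have := r2_lt b; have := r2_lt b'.
  have := zd2_neq0 b; have := zd2_neq0 b'; rewrite /NN.
  case: (a == 0); case: (b == 0); case: (zd2 b); case: (a' == 0); case: (b' == 0); case: (zd2 b') => /=;
  rewrite ?enc_dvd; move=> *; lia.
- by move=> v _; rewrite /ff; repeat case: ifP => _; apply: enc_gt0.
- move=> [a b] [a' b'] Vu Vv uv.
  have := vtx _ _ Vu; have := vtx _ _ Vv.
  rewrite adjE.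
  have -> : ((a, b) != (a', b')) = true by apply/eqP.
  rewrite aaE // !bbE // /ff /=.
  have := r1_lt a; have := r1_lt a'; have := r2_lt b; have := r2_lt b'.
  have CC : ~~ [&& zd2 b, zd2 b', a == 0 & a' == 0].
    apply/negP => /and4P [z z' /eqP ea /eqP ea']; apply: uv.
    by rewrite ea ea' (D2 _ _ (zd2P _ z) (zd2P _ z')).
  move: CC.
  have := zd2_neq0 b; have := zd2_neq0 b'; rewrite /NN.
  case: (a == 0); case: (b == 0); case: (zd2 b); case: (a' == 0); case: (b' == 0); case: (zd2 b') => /=;
  rewrite ?enc_dvd; move=> *; split => ?; lia.
Qed.
End Construct.

Lemma vswap (R1 R2 : finComNzRingType) (a : R1) (b : R2) :
  zdg_vertex ((a, b) : (R1 * R2)%type) -> zdg_vertex ((b, a) : (R2 * R1)%type).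
Proof.
case=> [[[c d] [cd0 e]] ab0].
have ac := congr1 fst e; have bd := congr1 snd e; simpl in ac, bd.
apply: (@vertexI R2 R1 b d a c) => //.
- by rewrite pair_neq0 orbC -pair_neq0.
- by rewrite pair_neq0 orbC -pair_neq0.
Qed.

Arguments vswap {R1 R2 a b}.

Lemma aswap (R1 R2 : finComNzRingType) (a a' : R1) (b b' : R2) :
  zdg_compl_adj ((a, b) : (R1 * R2)%type) (a', b') ->
  zdg_compl_adj ((b, a) : (R2 * R1)%type) (b', a').
Proof.
move/adjE => /andP [ne nz]; apply/adjE; rewrite orbC nz andbT.
by move: ne; rewrite !xpair_eqE andbC.
Qed.

Arguments aswap {R1 R2 a a' b b'}.

Lemma dg_swap (R1 R2 : finComNzRingType) :
  divisor_graph (@zdg_vertex (R2 * R1)%type) (@zdg_compl_adj (R2 * R1)%type) ->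
  divisor_graph (@zdg_vertex (R1 * R2)%type) (@zdg_compl_adj (R1 * R2)%type).
Proof.
case=> [[[b a] Vv] [f [finj [fpos fadj]]]].
split; first by exists (a, b); apply: vswap.
exists (fun x => f (x.2, x.1)); split; [|split].
- move=> [a1 b1] [a2 b2] V1 V2 /= E.
  have := finj _ _ (vswap V1) (vswap V2) E.
  by case=> e1 e2; rewrite e1 e2.
- by move=> [a1 b1] V1 /=; apply: fpos; apply: vswap.
- move=> [a1 b1] [a2 b2] V1 V2 ne /=.
  have ne' : ((b1, a1) : (R2 * R1)%type) <> (b2, a2) by case=> e1 e2; apply: ne; rewrite e1 e2.
  rewrite -(fadj _ _ (vswap V1) (vswap V2) ne'); split; first exact: aswap.
  by move/aswap.
Qed.

Theorem theorem2p2 (R1 R2 : finComNzRingType) :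
  principal_ideal_ring R1 -> principal_ideal_ring R2 ->
  zdg_diam0 R1 -> zdg_diam0 R2 ->
  (divisor_graph (@zdg_vertex (R1 * R2)%type) (@zdg_compl_adj (R1 * R2)%type)
   <-> integral_domain R1 \/ integral_domain R2).
Proof.
move=> _ _ D1 D2; split.
- move=> G.
  case: (dichot _ D1) => [h|[z1 [n1 s1]]]; first by left.
  case: (dichot _ D2) => [h|[z2 [n2 s2]]]; first by right.
  by case: (not_dg _ _ _ _ n1 s1 n2 s2 G).
- case=> [I1|I2].
  + exact: (construct _ _ I1 D2).
  + apply: dg_swap; exact: (construct _ _ I2 D1).
Qed.
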